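(* Let $L>0$ and let $\rho:[0,L]\to\mathbb{R}_{>0}$ be a fixed (time-independent) normalized density, $\int_0^L\rho=1$, for which there are constants $0<d_l\le d_u<\infty$ with $d_l\le \rho(x)\le d_u$ on $[0,L]$ (and such that $\partial_x\rho$ is bounded, with $0<D_l\le\partial_x\rho\le D_u<\infty$ on $(0,L)$). Let $\Theta(x)=\int_0^x\rho(\bar x)\,d\bar x$. Consider the system $$\partial_t X=\frac{1}{\rho}\,\partial_x\!\left(\frac{\partial_x X}{\rho}\right)\ \text{on } (0,L),\qquad X(t,0)=\alpha(t),\quad X(t,L)=\beta(t),\quad X(0,x)=X_0(x),$$ $$\dot\alpha(t)=-\alpha(t),\qquad \dot\beta(t)=1-\beta(t).$$ Assume that this system is well posed, that its solution is sufficiently smooth (at least $C^2$ in the spatial variable, also as $t\to\infty$), and that $X(t,\cdot)$ belongs to the Sobolev space $H^1((0,L))$. Then for every $C^2$ initial condition $X_0$, the solution $X(t,x)$ converges pointwise to $\Theta(x)$ as $t\to\infty$, for all $x\in(0,L)$.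
   Context: $H^1((0,L))=W^{1,2}((0,L))$ denotes the Sobolev space of square-integrable functions with square-integrable weak derivative. The variable $X$ is a ''pseudo-coordinate'' of the agents of a stationary one-dimensional swarm with density $\rho$, and $\alpha,\beta$ are boundary inputs whose initial values are the boundary values of $X_0$. *)

(* Defs.v *)
From Stdlib Require Import Reals.
From Coquelicot Require Import Coquelicot.
Open Scope R_scope.

Definition cont_on_closed (a b : R) (f : R -> R) : Prop :=
  forall x, a <= x <= b ->
  forall eps : R, 0 < eps -> exists delta : R, 0 < delta /\
    forall y, a <= y <= b -> Rabs (y - x) < delta -> Rabs (f y - f x) < eps.

Definition C2_on (a b : R) (f : R -> R) : Prop :=
  exists f1 f2 : R -> R,
    (forall x, a < x < b -> is_derive f x (f1 x) /\ is_derive f1 x (f2 x)) /\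
    cont_on_closed a b f /\ cont_on_closed a b f1 /\ cont_on_closed a b f2.

Definition cont_on_strip (L : R) (g : R -> R -> R) : Prop :=
  forall t x, 0 <= t -> 0 <= x <= L ->
  forall eps : R, 0 < eps -> exists delta : R, 0 < delta /\
    forall s y, 0 <= s -> 0 <= y <= L ->
      Rabs (s - t) < delta -> Rabs (y - x) < delta ->
      Rabs (g s y - g t x) < eps.

Definition test_fun (L : R) (phi : R -> R) : Prop :=
  (forall n x, ex_derive_n phi n x) /\
  exists a b, 0 < a /\ a < b /\ b < L /\
    forall y, (y < a \/ b < y) -> phi y = 0.

(* Membership in H^1((0,L)) = W^{1,2}((0,L)) (Riemann-integral version):
   u is square integrable and has a square integrable weak derivative g. *)
Definition in_H1 (L : R) (u : R -> R) : Prop :=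
  ex_RInt (fun x => u x ^ 2) 0 L /\
  exists g : R -> R,
    ex_RInt (fun x => g x ^ 2) 0 L /\
    forall phi, test_fun L phi ->
      RInt (fun x => u x * Derive phi x) 0 L = - RInt (fun x => g x * phi x) 0 L.

Definition Theta (rho : R -> R) (x : R) : R := RInt rho 0 x.

(* Main.v *)
Require Import Defs.
From Stdlib Require Import Reals Lra Psatz ClassicalEpsilon.
From Coquelicot Require Import Coquelicot.
Open Scope R_scope.

Definition clamp (L y : R) := Rmax 0 (Rmin L y).

Lemma clamp_in L y : 0 <= L -> 0 <= clamp L y <= L.
Proof. intros; unfold clamp, Rmax, Rmin; repeat destruct Rle_dec; lra. Qed.

Lemma clamp_id L y : 0 <= y <= L -> clamp L y = y.
Proof. intros; unfold clamp, Rmax, Rmin; repeat destruct Rle_dec; lra. Qed.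

Lemma clamp_lip L y z : Rabs (clamp L y - clamp L z) <= Rabs (y - z).
Proof. unfold clamp, Rmax, Rmin; repeat destruct Rle_dec; unfold Rabs;
  repeat destruct Rcase_abs; lra. Qed.

Lemma cont_clamp L f : 0 <= L -> cont_on_closed 0 L f ->
  forall x, continuity_pt (fun y => f (clamp L y)) x.
Proof.
  intros HL Hf x eps Heps.
  destruct (Hf (clamp L x) (clamp_in L x HL) eps Heps) as [d [Hd H]].
  exists d; split; [lra|]. intros y [_ Hy]. simpl in *. unfold R_dist in *.
  apply H. apply clamp_in; auto.
  eapply Rle_lt_trans; [apply clamp_lip|]. auto.
Qed.

Lemma strip_x L g t : cont_on_strip L g -> 0 <= t -> cont_on_closed 0 L (g t).
Proof.
  intros Hg Ht x Hx eps Heps. destruct (Hg t x Ht Hx eps Heps) as [d [Hd H]].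
  exists d; split; auto. intros y Hy Hyx. apply H; auto. rewrite Rminus_eq_0, Rabs_R0; lra.
Qed.

Lemma strip_t L g x : cont_on_strip L g -> 0 <= x <= L ->
  forall r, continuity_pt (fun s => g (Rmax 0 s) x) r.
Proof.
  intros Hg Hx r eps Heps.
  assert (H0: 0 <= Rmax 0 r) by apply Rmax_l.
  destruct (Hg _ x H0 Hx eps Heps) as [d [Hd H]].
  exists d; split; [lra|]. intros y [_ Hy]. simpl in *. unfold R_dist in *.
  apply H; auto. apply Rmax_l.
  eapply Rle_lt_trans; [|apply Hy]. unfold Rmax; repeat destruct Rle_dec; unfold Rabs;
  repeat destruct Rcase_abs; lra.
  rewrite Rminus_eq_0, Rabs_R0; lra.
Qed.

Lemma deriv_left_ge0 g x l d : is_derive g x l -> 0 < d ->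
  (forall y, x - d < y < x -> g y <= g x) -> 0 <= l.
Proof.
  intros Hd Hdp Hy. apply is_derive_Reals in Hd.
  destruct (Rle_or_lt 0 l) as [|Hl]; auto. exfalso.
  destruct (Hd (- l)) as [[e He] Hdelta]; [lra|].
  set (h := - Rmin (e/2) (d/2)).
  assert (Hh: h < 0) by (unfold h, Rmin; destruct Rle_dec; lra).
  assert (Hh2: Rabs h < e) by (unfold h, Rmin; destruct Rle_dec; rewrite Rabs_Ropp, Rabs_right; lra).
  specialize (Hdelta h ltac:(lra) Hh2).
  assert (Hy' := Hy (x + h) ltac:(unfold h, Rmin; destruct Rle_dec; lra)).
  assert (Hq: 0 <= (g (x + h) - g x) / h).
  { unfold Rdiv. replace ((g (x + h) - g x) * / h) with ((g x - g (x+h)) * / - h)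
      by (field; lra). apply Rmult_le_pos; [lra|]. left; apply Rinv_0_lt_compat; lra. }
  revert Hdelta. unfold Rabs; destruct Rcase_abs; lra.
Qed.

Lemma deriv_right_pos g x l : is_derive g x l -> 0 < l -> g x = 0 ->
  exists d, 0 < d /\ forall y, x < y < x + d -> 0 < g y.
Proof.
  intros Hd Hl Hg0. apply is_derive_Reals in Hd.
  destruct (Hd l Hl) as [[e He] Hdelta]. exists e; split; auto.
  intros y Hy. specialize (Hdelta (y - x) ltac:(lra)
     ltac:(rewrite Rabs_right; simpl; lra)).
  replace (x + (y - x)) with y in Hdelta by ring. rewrite Hg0 in Hdelta.
  assert (0 < (g y - 0) / (y - x)) by (revert Hdelta; unfold Rabs; destruct Rcase_abs; lra).
  unfold Rdiv in H. rewrite Rminus_0_r in H.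
  assert (0 < y - x) by lra.
  apply Rmult_lt_reg_r with (/ (y - x)). apply Rinv_0_lt_compat; lra. lra.
Qed.
Lemma deriv_right_le0 g x l d : is_derive g x l -> 0 < d ->
  (forall y, x < y < x + d -> g y <= g x) -> l <= 0.
Proof.
  intros Hd Hdp Hy. apply is_derive_Reals in Hd.
  destruct (Rle_or_lt l 0) as [|Hl]; auto. exfalso.
  destruct (Hd l) as [[e He] Hdelta]; [lra|].
  set (h := Rmin (e/2) (d/2)).
  assert (Hh: 0 < h) by (unfold h, Rmin; destruct Rle_dec; lra).
  assert (Hh2: Rabs h < e) by (unfold h, Rmin; destruct Rle_dec; rewrite Rabs_right; lra).
  specialize (Hdelta h ltac:(lra) Hh2).
  assert (Hy' := Hy (x + h) ltac:(unfold h, Rmin; destruct Rle_dec; lra)).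
  assert (Hq: (g (x + h) - g x) / h <= 0).
  { unfold Rdiv. replace ((g (x + h) - g x) * / h) with (- ((g x - g (x+h)) * / h))
      by (field; lra). cut (0 <= (g x - g (x + h)) * / h); [lra|].
    apply Rmult_le_pos; [lra|]. left; apply Rinv_0_lt_compat; lra. }
  revert Hdelta. unfold Rabs; destruct Rcase_abs; lra.
Qed.

Lemma max_interior f f1 a b x d : a < x < b ->
  (forall y, a < y < b -> is_derive f y (f1 y)) -> is_derive f1 x d ->
  (forall y, a < y < b -> f y <= f x) -> f1 x = 0 /\ d <= 0.
Proof.
  intros Hx Hder Hd Hmax.
  assert (H1: f1 x = 0).
  { apply Rle_antisym.
    - apply (deriv_right_le0 f x (f1 x) (b - x)); [apply Hder; lra|lra|].
      intros; apply Hmax; lra.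
    - apply (deriv_left_ge0 f x (f1 x) (x - a)); [apply Hder; lra|lra|].
      intros; apply Hmax; lra. }
  split; auto.
  destruct (Rle_or_lt d 0) as [|Hdp]; auto. exfalso.
  destruct (deriv_right_pos f1 x d Hd Hdp H1) as [e [He Hpos]].
  set (y := x + Rmin e (b - x) / 2).
  assert (Hy: x < y < x + e /\ y < b) by (unfold y, Rmin; destruct Rle_dec; lra).
  destruct (MVT_cor2 f f1 x y ltac:(lra)) as [c [Hc1 Hc2]].
  { intros c Hc. apply is_derive_Reals, Hder; lra. }
  assert (0 < f1 c) by (apply Hpos; lra).
  assert (f y <= f x) by (apply Hmax; lra).
  assert (0 < f1 c * (y - x)) by (apply Rmult_lt_0_compat; lra). lra.
Qed.
Lemma lip_cont (m : R -> R) K : (forall t s, 0 <= t -> 0 <= s -> Rabs (m t - m s) <= K * Rabs (t - s)) ->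
  forall r, continuity_pt (fun s => m (Rmax 0 s)) r.
Proof.
  intros Hm r eps Heps. exists (eps / (Rabs K + 1)). split.
  { apply Rlt_gt, Rdiv_lt_0_compat; [lra| pose proof (Rabs_pos K); lra]. }
  intros y [_ Hy]. simpl in *. unfold R_dist in *.
  assert (Hk: 0 < Rabs K + 1) by (pose proof (Rabs_pos K); lra).
  assert (Hc: Rabs (Rmax 0 y - Rmax 0 r) <= Rabs (y - r)) by
   (unfold Rmax; repeat destruct Rle_dec; unfold Rabs; repeat destruct Rcase_abs; lra).
  eapply Rle_lt_trans. apply Hm; apply Rmax_l.
  apply Rle_lt_trans with (Rabs K * Rabs (y - r)).
  { eapply Rle_trans; [apply Rmult_le_compat_r; [apply Rabs_pos| apply RRle_abs]|].
    apply Rmult_le_compat_l; [apply Rabs_pos|auto]. }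
  apply Rle_lt_trans with ((Rabs K + 1) * Rabs (y - r)).
  { apply Rmult_le_compat_r; [apply Rabs_pos|lra]. }
  replace eps with ((Rabs K + 1) * (eps / (Rabs K + 1))) by (field; lra).
  apply Rmult_lt_compat_l; lra.
Qed.

Lemma core (L K : R) (W : R -> R -> R) : 0 < L ->
  (forall t, 0 <= t -> forall x, continuity_pt (fun y => W t (clamp L y)) x) ->
  (forall t s x, 0 <= t -> 0 <= s -> 0 <= x <= L -> Rabs (W t x - W s x) <= K * Rabs (t - s)) ->
  (forall x, 0 <= x <= L -> W 0 x <= 0) ->
  (forall t, 0 <= t -> W t 0 <= 0 /\ W t L <= 0) ->
  (forall t x, 0 < t -> 0 < x < L -> (forall y, 0 <= y <= L -> W t y <= W t x) ->
      (forall s, 0 <= s <= t -> W s x <= W t x) -> False) ->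
  forall t x, 0 <= t -> 0 <= x <= L -> W t x <= 0.
Proof.
  intros HL Hc Hlip H0 Hb Hpde t0 x0 Ht0 Hx0.
  destruct (Rle_or_lt (W t0 x0) 0) as [|Hpos]; auto. exfalso.
  set (P t x := 0 <= x <= L /\ forall y, 0 <= y <= L -> W t y <= W t x).
  assert (Pex: forall t, 0 <= t -> exists x, P t x).
  { intros t Ht. destruct (continuity_ab_maj (fun y => W t (clamp L y)) 0 L ltac:(lra)
      (fun c _ => Hc t Ht c)) as [xm [H1 H2]].
    exists xm; split; auto. intros y Hy. specialize (H1 y Hy). simpl in H1.
    rewrite !clamp_id in H1; auto. }
  set (am t := epsilon (inhabits 0) (P t)).
  assert (Ham: forall t, 0 <= t -> P t (am t)).
  { intros t Ht. apply (epsilon_spec (inhabits 0) (P t)), Pex, Ht. }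
  set (m t := W t (am t)).
  assert (Hmlip: forall t s, 0 <= t -> 0 <= s -> Rabs (m t - m s) <= K * Rabs (t - s)).
  { intros t s Ht Hs. destruct (Ham t Ht) as [Ht1 Ht2]. destruct (Ham s Hs) as [Hs1 Hs2].
    unfold m. assert (A1 := Ht2 (am s) Hs1). assert (A2 := Hs2 (am t) Ht1).
    assert (B1 := Hlip t s (am t) Ht Hs Ht1). assert (B2 := Hlip t s (am s) Ht Hs Hs1).
    set (k := K * Rabs (t - s)) in *. clearbody k.
    revert B1 B2. unfold Rabs. repeat destruct Rcase_abs; lra. }
  destruct (continuity_ab_maj (fun s => m (Rmax 0 s)) 0 t0 Ht0
     (fun c _ => lip_cont m K Hmlip c)) as [t1 [Hmax Ht1]].
  rewrite Rmax_right in Hmax by lra.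
  assert (Hmx: forall c, 0 <= c <= t0 -> m c <= m t1).
  { intros c Hcc. specialize (Hmax c Hcc). rewrite Rmax_right in Hmax by lra. auto. }
  destruct (Ham t1 ltac:(lra)) as [Hx1 Hx1m].
  assert (Hm0: m t0 >= W t0 x0) by (destruct (Ham t0 Ht0) as [_ HH]; apply Rle_ge, HH; auto).
  assert (Hmt1: m t1 > 0) by (pose proof (Hmx t0 ltac:(lra)); lra).
  assert (Ht1p: 0 < t1).
  { destruct (Rle_or_lt t1 0); auto. assert (t1 = 0) by lra. subst t1.
    assert (W 0 (am 0) <= 0) by (apply H0; auto). unfold m in Hmt1. lra. }
  apply (Hpde t1 (am t1) Ht1p).
  - split.
    + destruct Hx1 as [[Hx|Hx] _]; auto. exfalso. destruct (Hb t1 ltac:(lra)) as [Hb1 _].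
      unfold m in Hmt1. rewrite Hx in Hb1. lra.
    + destruct Hx1 as [_ [Hx|Hx]]; auto. exfalso. destruct (Hb t1 ltac:(lra)) as [_ Hb1].
      unfold m in Hmt1. rewrite <- Hx in Hb1. lra.
  - apply Hx1m.
  - intros s Hs. destruct (Ham s ltac:(lra)) as [_ HH]. specialize (HH (am t1) Hx1).
    pose proof (Hmx s ltac:(lra)). unfold m in *. lra.
Qed.
Ltac cR := unfold minus; unfold plus, mult, opp, zero, scal, one; simpl; unfold plus, mult, opp, zero, scal, one; simpl.

Lemma cont_of_der f x l : is_derive f x l -> continuity_pt f x.
Proof. intros H. apply continuity_pt_filterlim. apply (ex_derive_continuous f x). exists l; auto. Qed.

Lemma is_derive_eq (f : R -> R) x l l' : is_derive f x l -> l = l' -> is_derive f x l'.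
Proof. intros H E; subst; auto. Qed.

Lemma ode_sol (a : R -> R) k : (forall t, 0 <= t -> is_derive a t (k - a t)) ->
  forall t, 0 <= t -> a t = k + (a 0 - k) * exp (- t).
Proof.
  intros Ha t Ht.
  set (h r := (a r - k) * exp r).
  assert (Hd: forall r, 0 <= r -> is_derive h r 0).
  { intros r Hr. unfold h.
    eapply is_derive_eq.
    apply (is_derive_mult (fun r => a r - k) exp).
    apply (is_derive_minus a (fun _ => k)). apply Ha; auto. apply is_derive_const.
    apply is_derive_exp. intros; apply Rmult_comm. cR. ring. }
  destruct (MVT_gen h 0 t (fun _ => 0)) as [c [Hc He]].
  { intros x Hx. apply Hd. unfold Rmin in Hx; destruct Rle_dec; lra. }
  { intros x Hx. apply (cont_of_der h x 0), Hd. unfold Rmin in Hx; destruct Rle_dec; lra. }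
  unfold h in He. rewrite exp_0 in He.
  assert (E: (a t - k) * exp t = a 0 - k) by lra.
  replace (a t) with (k + (a t - k) * exp t * exp (- t)).
  rewrite E; ring. rewrite Rmult_assoc, <- exp_plus, Rplus_opp_r, exp_0; ring.
Qed.
Lemma exp_lip t s : 0 <= t -> 0 <= s -> Rabs (exp (- t) - exp (- s)) <= Rabs (t - s).
Proof.
  intros Ht Hs.
  assert (Hd: forall r, is_derive (fun r => exp (- r)) r (- exp (- r))).
  { intros r. auto_derive; auto. ring. }
  destruct (MVT_gen (fun r => exp (- r)) s t (fun r => - exp (- r))) as [c [Hc He]].
  { intros; apply Hd. }
  { intros x _. eapply cont_of_der, Hd. }
  simpl in He. rewrite He.
  assert (0 <= c) by (destruct Hc as [Hc _]; unfold Rmin in Hc; destruct Rle_dec; lra).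
  rewrite Rabs_mult, Rabs_Ropp, Rabs_right by (left; apply exp_pos).
  rewrite <- (Rmult_1_l (Rabs (t - s))) at 2. apply Rmult_le_compat_r. apply Rabs_pos.
  rewrite <- exp_0. destruct (Req_dec c 0). subst; rewrite Ropp_0; lra.
  left; apply exp_increasing; lra.
Qed.

Section Th.
Variables (L : R) (rho : R -> R).
Hypothesis HL : 0 < L.
Hypothesis Hrc : cont_on_closed 0 L rho.

Definition rhoc y := rho (clamp L y).
Definition Thc y := RInt rhoc 0 y.

Lemma rhoc_cont y : continuous rhoc y.
Proof. apply continuity_pt_filterlim. apply (cont_clamp L rho); auto; lra. Qed.

Lemma rhoc_int a b : ex_RInt rhoc a b.
Proof. apply (@ex_RInt_continuous R_CompleteNormedModule). intros; apply rhoc_cont. Qed.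

Lemma Thc_der y : is_derive Thc y (rhoc y).
Proof.
  apply (is_derive_RInt rhoc Thc 0). apply filter_forall. intros z. apply (@RInt_correct R_CompleteNormedModule), rhoc_int.
  apply rhoc_cont.
Qed.

Lemma Thc_Theta y : 0 <= y <= L -> Thc y = Theta rho y.
Proof.
  intros Hy. unfold Thc, Theta. apply RInt_ext. intros x Hx. unfold rhoc. rewrite clamp_id; auto.
  unfold Rmin, Rmax in Hx; destruct Rle_dec; lra.
Qed.
End Th.
Lemma Thc_0 L rho : Thc L rho 0 = 0.
Proof. unfold Thc. apply (@RInt_point R_CompleteNormedModule). Qed.

Lemma rhoc_eq L rho y : 0 <= y <= L -> rhoc L rho y = rho y.
Proof. intros; unfold rhoc; rewrite clamp_id; auto. Qed.

Lemma Thc_bounds L rho : 0 < L -> cont_on_closed 0 L rho ->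
  (forall x, 0 <= x <= L -> 0 <= rho x) ->
  forall y, 0 <= y <= L -> 0 <= Thc L rho y <= Thc L rho L.
Proof.
  intros HL Hc Hp y Hy.
  assert (Hnn: forall x, 0 <= x <= L -> 0 <= rhoc L rho x) by (intros; rewrite rhoc_eq; auto).
  split.
  - unfold Thc. apply RInt_ge_0. lra. apply rhoc_int; auto. intros; apply Hnn; lra.
  - unfold Thc. rewrite <- (@RInt_Chasles R_CompleteNormedModule _ 0 y L) by (apply rhoc_int; auto).
    assert (0 <= RInt (rhoc L rho) y L).
    { apply RInt_ge_0. lra. apply rhoc_int; auto. intros; apply Hnn; lra. }
    cR. lra.
Qed.
Lemma cont_W (f g : R -> R) a b c d x : continuity_pt f x -> continuity_pt g x ->
  continuity_pt (fun y => a * f y - (b * g y + c * (2 - g y ^2) + d)) x.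
Proof.
intros H H0.
apply continuity_pt_filterlim in H. apply continuity_pt_filterlim in H0. apply continuity_pt_filterlim.
apply (continuous_minus (fun y => a * f y) (fun y => b * g y + c * (2 - g y ^2) + d)).
apply (continuous_mult (fun _ => a) f); auto. apply continuous_const.
apply (continuous_plus (fun y => b * g y + c * (2 - g y ^2)) (fun _ => d)).
apply (continuous_plus (fun y => b * g y) (fun y => c * (2 - g y ^2))).
apply (continuous_mult (fun _ => b) g); auto. apply continuous_const.
apply (continuous_mult (fun _ => c) (fun y => 2 - g y ^2)). apply continuous_const.
apply (continuous_minus (fun _ => 2) (fun y => g y ^2)). apply continuous_const.
apply (continuous_mult g (fun y => g y ^ 1)); auto.
apply (continuous_mult g (fun y => 1)); auto. apply continuous_const.
apply continuous_const.
Qed.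

Lemma Derive_bound a b r r' M du Du dl : 0 < dl -> dl <= r <= du -> Rabs r' <= Du ->
  Rabs a <= M -> Rabs b <= M ->
  Rabs (/ r * ((b * r - a * r') / r ^ 2)) <= (M * du + M * Du) / dl ^ 3.
Proof.
  intros Hdl Hr Hr' Ha Hb.
  replace (/ r * ((b * r - a * r') / r ^ 2)) with ((b * r - a * r') / r ^ 3) by (field; lra).
  unfold Rdiv. rewrite Rabs_mult. rewrite (Rabs_right (/ r ^ 3)).
  2: { left; apply Rinv_0_lt_compat; apply pow_lt; lra. }
  apply Rmult_le_compat.
  - apply Rabs_pos.
  - left; apply Rinv_0_lt_compat; apply pow_lt; lra.
  - eapply Rle_trans; [apply Rabs_triang|]. rewrite Rabs_Ropp, !Rabs_mult.
    rewrite (Rabs_right r) by lra. apply Rplus_le_compat.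
    apply Rmult_le_compat; try apply Rabs_pos; lra.
    apply Rmult_le_compat; try apply Rabs_pos; lra.
  - apply Rinv_le_contravar. apply pow_lt; lra. apply pow_incr; lra.
Qed.
Lemma MVT_open f df a b : a < b -> (forall c, a < c < b -> is_derive f c (df c)) ->
  (forall c, a <= c <= b -> continuity_pt f c) ->
  exists c, a < c < b /\ f b - f a = df c * (b - a).
Proof.
  intros Hab Hd Hc.
  assert (pr1 : forall c, a < c < b -> derivable_pt f c).
  { intros c Hc'. exists (df c). apply is_derive_Reals, Hd, Hc'. }
  assert (pr2 : forall c, a < c < b -> derivable_pt id c).
  { intros c _. apply derivable_pt_id. }
  destruct (MVT f id a b pr1 pr2 Hab Hc) as [c [P E]].
  { intros; apply derivable_continuous_pt, derivable_pt_id. }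
  exists c; split; auto.
  rewrite (derive_pt_eq_0 f c (df c) (pr1 c P)) in E by (apply is_derive_Reals, Hd, P).
  rewrite (derive_pt_eq_0 id c 1 (pr2 c P)) in E by apply derivable_pt_lim_id.
  unfold id in E. lra.
Qed.

Lemma lip_deriv f df a b B : a <= b -> (forall c, a < c < b -> is_derive f c (df c)) ->
  (forall c, a <= c <= b -> continuity_pt f c) -> (forall c, a < c < b -> Rabs (df c) <= B) ->
  Rabs (f b - f a) <= B * Rabs (b - a).
Proof.
  intros Hab Hd Hc HB. destruct (Req_dec a b) as [->|Hne].
  { rewrite !Rminus_eq_0, !Rabs_R0; lra. }
  destruct (MVT_open f df a b ltac:(lra) Hd Hc) as [c [Hc' E]].
  rewrite E, Rabs_mult. apply Rmult_le_compat_r. apply Rabs_pos. auto.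
Qed.
Lemma cont_pt_closed a b f : (forall x, continuity_pt f x) -> cont_on_closed a b f.
Proof.
  intros Hf x _ eps Heps. destruct (Hf x eps Heps) as [d [Hd H]].
  exists d; split; [lra|]. intros y _ Hy.
  destruct (Req_dec y x) as [->|Hne]. rewrite Rminus_eq_0, Rabs_R0; lra.
  apply (H y). split; [split; [exact I| auto]| simpl; unfold R_dist; auto].
Qed.

Lemma abs_le_inv x a : Rabs x <= a -> - a <= x <= a.
Proof. unfold Rabs; destruct Rcase_abs; lra. Qed.

Lemma abs_le_intro x a : - a <= x <= a -> Rabs x <= a.
Proof. unfold Rabs; destruct Rcase_abs; lra. Qed.
Theorem mainTheorem2
  (L : R) (HL : 0 < L)
  (rho : R -> R) (d_l d_u D_l D_u : R)
  (Hrho_cont : cont_on_closed 0 L rho)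
  (Hrho_norm : RInt rho 0 L = 1)
  (Hd : 0 < d_l /\ d_l <= d_u)
  (Hrho_bd : forall x, 0 <= x <= L -> d_l <= rho x <= d_u)
  (HD : 0 < D_l /\ D_l <= D_u)
  (Hrho_der : forall x, 0 < x < L -> ex_derive rho x /\ D_l <= Derive rho x <= D_u)
  (X0 : R -> R) (HX0 : C2_on 0 L X0)
  (X X1 X2 : R -> R -> R) (alpha beta : R -> R)
  (* regularity of the solution: C^2 in space up to the boundary, with
     jointly continuous derivatives, C^1 in time *)
  (HX1 : forall t x, 0 <= t -> 0 < x < L -> is_derive (X t) x (X1 t x))
  (HX2 : forall t x, 0 <= t -> 0 < x < L -> is_derive (X1 t) x (X2 t x))
  (HXc : cont_on_strip L X) (HX1c : cont_on_strip L X1) (HX2c : cont_on_strip L X2)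
  (* smoothness persisting as t -> oo *)
  (Hunif : exists M, forall t x, 0 <= t -> 0 <= x <= L ->
             Rabs (X1 t x) <= M /\ Rabs (X2 t x) <= M)
  (HH1 : forall t, 0 <= t -> in_H1 L (X t))
  (* the PDE *)
  (Hpde : forall t x, 0 < t -> 0 < x < L ->
     ex_derive (fun s => X s x) t /\
     ex_derive (fun y => X1 t y / rho y) x /\
     Derive (fun s => X s x) t = / rho x * Derive (fun y => X1 t y / rho y) x)
  (* boundary and initial conditions *)
  (Hbc0 : forall t, 0 <= t -> X t 0 = alpha t)
  (HbcL : forall t, 0 <= t -> X t L = beta t)
  (Hinit : forall x, 0 <= x <= L -> X 0 x = X0 x)
  (* boundary dynamics *)
  (Halpha : forall t, 0 <= t -> is_derive alpha t (- alpha t))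
  (Hbeta : forall t, 0 <= t -> is_derive beta t (1 - beta t))
  (Hab0 : alpha 0 = X0 0 /\ beta 0 = X0 L) :
  forall x, 0 < x < L -> is_lim (fun t => X t x) p_infty (Theta rho x).
Proof.
  intros x0 Hx0.
  destruct Hd as [Hdl Hdlu]. destruct HD as [HDl HDlu].
  destruct Hunif as [M HM].
  assert (HM0 : 0 <= M) by (destruct (HM 0 0 ltac:(lra) ltac:(lra)) as [H _];
     pose proof (Rabs_pos (X1 0 0)); lra).
  set (Th := Thc L rho).
  assert (Hrp : forall y, 0 <= y <= L -> 0 < rho y) by (intros y Hy; destruct (Hrho_bd y Hy); lra).
  assert (HTh0 : Th 0 = 0) by apply Thc_0.
  assert (HThL : Th L = 1) by (unfold Th; rewrite Thc_Theta by lra; exact Hrho_norm).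
  assert (HThB : forall y, 0 <= y <= L -> 0 <= Th y <= 1).
  { intros y Hy. rewrite <- HThL. apply Thc_bounds; auto. intros; left; auto. }
  assert (HThd : forall y, 0 < y < L -> is_derive Th y (rho y)).
  { intros y Hy. rewrite <- (rhoc_eq L rho y) by lra. apply Thc_der; auto. }
  assert (Hrd : forall y, 0 < y < L -> is_derive rho y (Derive rho y)).
  { intros y Hy. apply Derive_correct, Hrho_der, Hy. }
  assert (Hal : forall t, 0 <= t -> alpha t = alpha 0 * exp (- t)).
  { intros t Ht.
    assert (Ha' : forall s, 0 <= s -> is_derive alpha s (0 - alpha s)).
    { intros s Hs. apply (is_derive_eq _ _ _ _ (Halpha s Hs)). change (- alpha s = 0 - alpha s). ring. }
    rewrite (ode_sol alpha 0 Ha' t Ht). ring. }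
  assert (Hbe : forall t, 0 <= t -> beta t = 1 + (beta 0 - 1) * exp (- t)).
  { intros t Ht. apply (ode_sol beta 1); auto. }
  set (B := (M * d_u + M * D_u) / d_l ^ 3).
  assert (HDX : forall t y, 0 < t -> 0 < y < L ->
     Derive (fun s => X s y) t =
     / rho y * ((X2 t y * rho y - X1 t y * Derive rho y) / rho y ^ 2)).
  { intros t y Ht Hy. destruct (Hpde t y Ht Hy) as [_ [_ E]]. rewrite E. f_equal.
    apply is_derive_unique. apply is_derive_div. apply HX2; lra. apply Hrd; auto.
    assert (0 < rho y) by (apply Hrp; lra). lra. }
  assert (HB : forall t y, 0 < t -> 0 < y < L -> Rabs (Derive (fun s => X s y) t) <= B).
  { intros t y Ht Hy. rewrite HDX by auto. unfold B.
    destruct (HM t y ltac:(lra) ltac:(lra)).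
    destruct (Hrho_der y Hy) as [_ Hd']. 
    apply Derive_bound; auto. apply Hrho_bd; lra.
    unfold Rabs; destruct Rcase_abs; lra. }
  assert (HB0 : 0 <= B).
  { unfold B. apply Rmult_le_pos. pose proof (Rmult_le_pos M d_u HM0 ltac:(lra)).
    pose proof (Rmult_le_pos M D_u HM0 ltac:(lra)). lra.
    left; apply Rinv_0_lt_compat, pow_lt; lra. }
  set (KX := B + Rabs (alpha 0) + Rabs (beta 0 - 1)).
  assert (HXlip : forall t s y, 0 <= t -> 0 <= s -> 0 <= y <= L ->
     Rabs (X t y - X s y) <= KX * Rabs (t - s)).
  { intros t s y Ht Hs Hy.
    assert (Hab : 0 <= Rabs (alpha 0) /\ 0 <= Rabs (beta 0 - 1)) by (split; apply Rabs_pos).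
    assert (Hts := Rabs_pos (t - s)).
    destruct (Req_dec y 0) as [->|Hy0].
    { rewrite (Hbc0 t Ht), (Hbc0 s Hs), (Hal t Ht), (Hal s Hs). rewrite <- Rmult_minus_distr_l, Rabs_mult.
      pose proof (exp_lip t s Ht Hs).
      apply Rle_trans with (Rabs (alpha 0) * Rabs (t - s)).
      apply Rmult_le_compat_l; auto. apply Rabs_pos.
      apply Rmult_le_compat_r; auto. unfold KX; lra. }
    destruct (Req_dec y L) as [->|HyL].
    { rewrite (HbcL t Ht), (HbcL s Hs), (Hbe t Ht), (Hbe s Hs).
      replace (1 + (beta 0 - 1) * exp (- t) - (1 + (beta 0 - 1) * exp (- s)))
        with ((beta 0 - 1) * (exp (- t) - exp (- s))) by ring. rewrite Rabs_mult.
      pose proof (exp_lip t s Ht Hs).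
      apply Rle_trans with (Rabs (beta 0 - 1) * Rabs (t - s)).
      apply Rmult_le_compat_l; auto. apply Rabs_pos.
      apply Rmult_le_compat_r; auto. unfold KX; lra. }
    assert (Hyi : 0 < y < L) by lra.
    set (f r := X (Rmax 0 r) y).
    assert (Hf : forall a b, 0 <= a <= b -> Rabs (f b - f a) <= B * Rabs (b - a)).
    { intros a b Hab2. apply (lip_deriv f (fun r => Derive (fun s => X s y) r)); [lra| | |].
      - intros r Hr. assert (Hr0 : 0 < r) by lra.
        apply (is_derive_ext_loc (fun s => X s y)).
        + exists (mkposreal r Hr0). intros z Hz. unfold f. rewrite Rmax_right; auto.
          unfold ball in Hz; simpl in Hz; unfold AbsRing_ball, abs, minus, plus, opp in Hz; simpl in Hz.
          revert Hz; unfold Rabs; destruct Rcase_abs; lra.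
        + apply Derive_correct. apply (Hpde r y Hr0 Hyi).
      - intros r _. apply (strip_t L X y HXc); lra.
      - intros r Hr. apply HB; auto; lra. }
    assert (E : Rabs (X t y - X s y) <= B * Rabs (t - s)).
    { destruct (Rle_lt_dec s t).
      - specialize (Hf s t ltac:(lra)). unfold f in Hf. rewrite !Rmax_right in Hf by lra. auto.
      - specialize (Hf t s ltac:(lra)). unfold f in Hf. rewrite !Rmax_right in Hf by lra.
        rewrite Rabs_minus_sym, (Rabs_minus_sym t). auto. }
    eapply Rle_trans; [apply E|]. apply Rmult_le_compat_r; auto. unfold KX; lra. }
  assert (HXc0 : forall y, continuity_pt (fun y => X 0 (clamp L y)) y).
  { apply cont_clamp. lra. apply strip_x; auto; lra. }
  destruct (continuity_ab_maj _ 0 L ltac:(lra) (fun c _ => HXc0 c)) as [ymx [Hymx _]].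
  destruct (continuity_ab_min _ 0 L ltac:(lra) (fun c _ => HXc0 c)) as [ymn [Hymn _]].
  set (xmx := X 0 (clamp L ymx)). set (xmn := X 0 (clamp L ymn)).
  assert (HX0b : forall y, 0 <= y <= L -> xmn <= X 0 y <= xmx).
  { intros y Hy. specialize (Hymx y Hy). specialize (Hymn y Hy). simpl in *.
    rewrite (clamp_id L y Hy) in Hymx, Hymn. split; auto. }
  set (C := Rabs (alpha 0) + Rabs (beta 0 - 1) + Rabs xmx + Rabs xmn + 2).
  assert (HC : Rabs (alpha 0) + Rabs (beta 0 - 1) + Rabs xmx + Rabs xmn + 2 <= C) by (unfold C; lra).
  assert (HC0 : 2 <= C) by (pose proof (Rabs_pos (alpha 0)); pose proof (Rabs_pos (beta 0 - 1));
     pose proof (Rabs_pos xmx); pose proof (Rabs_pos xmn); lra).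
  assert (HThc : forall y, continuity_pt (fun y => Th (clamp L y)) y).
  { apply cont_clamp. lra. apply cont_pt_closed. intros z. eapply cont_of_der. apply Thc_der; auto. }
  assert (HThq : forall y, 0 <= y <= L -> 1 <= 2 - Th y ^ 2 <= 2).
  { intros y Hy. destruct (HThB y Hy). split; nra. }
  assert (Hmain : forall sg, (sg = 1 \/ sg = -1) -> forall eps, 0 < eps -> forall t y, 0 <= t -> 0 <= y <= L ->
     sg * X t y - (sg * Th y + C * exp (- t) * (2 - Th y ^ 2) + eps * (1 + t)) <= 0).
  { intros sg Hsg eps Heps.
    apply (core L (KX + 2 * C + eps)
      (fun t y => sg * X t y - (sg * Th y + C * exp (- t) * (2 - Th y ^ 2) + eps * (1 + t)))); auto.
    - intros t Ht z.
      apply (cont_W (fun y => X t (clamp L y)) (fun y => Th (clamp L y)) sg sg (C * exp (- t)) (eps * (1 + t))).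
      apply cont_clamp. lra. apply strip_x; auto. apply HThc.
    - intros t s y Ht Hs Hy.
      set (a := Rabs (t - s)).
      assert (H1 := abs_le_inv _ _ (HXlip t s y Ht Hs Hy)).
      assert (H2 := abs_le_inv _ _ (exp_lip t s Ht Hs)). fold a in H2.
      assert (H3 := abs_le_inv (t - s) a (Rle_refl _)).
      assert (Hq := HThq y Hy).
      set (q := 2 - Th y ^ 2) in *.
      set (u := exp (- t) - exp (- s)) in H2.
      assert (Hpu : - (2 * C * a) <= C * q * u <= 2 * C * a).
      { assert (0 <= C * q) by (apply Rmult_le_pos; lra).
        assert (0 <= C * q * (a - u)) by (apply Rmult_le_pos; lra).
        assert (0 <= C * q * (a + u)) by (apply Rmult_le_pos; lra).
        assert (0 <= (2 * C - C * q) * a) by (apply Rmult_le_pos; [nra|lra]).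
        split; nra. }
      assert (Hea : - (eps * a) <= eps * (t - s) <= eps * a).
      { assert (0 <= eps * (a - (t - s))) by (apply Rmult_le_pos; lra).
        assert (0 <= eps * (a + (t - s))) by (apply Rmult_le_pos; lra). split; nra. }
      fold a in H1. assert (HXa : - (KX * a) <= sg * (X t y - X s y) <= KX * a) by (destruct Hsg as [-> | ->]; lra).
      apply abs_le_intro.
      replace (sg * X t y - (sg * Th y + C * exp (- t) * q + eps * (1 + t)) -
        (sg * X s y - (sg * Th y + C * exp (- s) * q + eps * (1 + s))))
        with (sg * (X t y - X s y) - C * q * u - eps * (t - s)) by (unfold u; ring).
      assert (Ha0 : 0 <= a) by apply Rabs_pos.
      rewrite !Rmult_plus_distr_r. lra.
    - intros y Hy. destruct (HThB y Hy) as [T0 T1]. destruct (HX0b y Hy) as [X0a X0b].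
      assert (Hq := HThq y Hy).
      rewrite Ropp_0, exp_0.
      assert (sg * X 0 y <= Rabs xmx + Rabs xmn).
      { pose proof (Rabs_pos xmx); pose proof (Rabs_pos xmn).
        pose proof (Rle_abs xmx). pose proof (Rle_abs (- xmn)). rewrite Rabs_Ropp in *.
        destruct Hsg; subst; lra. }
      assert (- (sg * Th y) <= 1) by (destruct Hsg; subst; lra).
      assert (C <= C * 1 * (2 - Th y ^ 2)).
      { rewrite Rmult_1_r. rewrite <- (Rmult_1_r C) at 1. apply Rmult_le_compat_l; lra. }
      pose proof (Rabs_pos (alpha 0)); pose proof (Rabs_pos (beta 0 - 1)). lra.
    - intros t Ht. pose proof (exp_pos (- t)) as He. split.
      + rewrite (Hbc0 t Ht), (Hal t Ht), HTh0.
        assert (sg * alpha 0 <= C).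
        { pose proof (Rle_abs (alpha 0)). pose proof (Rle_abs (- alpha 0)). rewrite Rabs_Ropp in *.
          pose proof (Rabs_pos xmx); pose proof (Rabs_pos xmn); pose proof (Rabs_pos (beta 0 - 1)).
          destruct Hsg; subst; lra. }
        assert (sg * (alpha 0 * exp (- t)) <= C * exp (- t) * (2 - 0 ^ 2)).
        { replace (C * exp (- t) * (2 - 0 ^ 2)) with (2 * C * exp (- t)) by ring.
          rewrite <- Rmult_assoc. apply Rmult_le_compat_r; lra. }
        assert (0 <= eps * (1 + t)) by (apply Rmult_le_pos; lra). lra.
      + rewrite (HbcL t Ht), (Hbe t Ht), HThL.
        assert (sg * (beta 0 - 1) <= C).
        { pose proof (Rle_abs (beta 0 - 1)). pose proof (Rle_abs (- (beta 0 - 1))). rewrite Rabs_Ropp in *.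
          pose proof (Rabs_pos xmx); pose proof (Rabs_pos xmn); pose proof (Rabs_pos (alpha 0)).
          destruct Hsg; subst; lra. }
        assert (sg * ((beta 0 - 1) * exp (- t)) <= C * exp (- t)).
        { rewrite <- Rmult_assoc. apply Rmult_le_compat_r; lra. }
        assert (0 <= eps * (1 + t)) by (apply Rmult_le_pos; lra).
        replace (sg * (1 + (beta 0 - 1) * exp (- t)) - (sg * 1 + C * exp (- t) * (2 - 1 ^ 2) + eps * (1 + t)))
          with (sg * ((beta 0 - 1) * exp (- t)) - C * exp (- t) - eps * (1 + t)) by ring. lra.
    - intros t y Ht Hy Hsp Htm. cbv beta in Hsp, Htm.
      set (c := C * exp (- t)).
      assert (Hc : 0 < c) by (unfold c; apply Rmult_lt_0_compat; [lra|apply exp_pos]).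
      set (f := fun z => sg * X t z - (sg * Th z + c * (2 - Th z ^ 2) + eps * (1 + t))).
      set (f1 := fun z => sg * X1 t z - (sg * rho z - c * (2 * Th z * rho z))).
      assert (Hder : forall z, 0 < z < L -> is_derive f z (f1 z)).
      { intros z Hz. unfold f, f1. eapply is_derive_eq.
        apply (is_derive_minus (fun z => sg * X t z) (fun z => sg * Th z + c * (2 - Th z ^ 2) + eps * (1 + t))).
        apply is_derive_scal. apply HX1; lra.
        apply (is_derive_plus (fun z => sg * Th z + c * (2 - Th z ^ 2)) (fun _ => eps * (1 + t))).
        apply (is_derive_plus (fun z => sg * Th z) (fun z => c * (2 - Th z ^ 2))).
        apply is_derive_scal, HThd; auto.
        apply is_derive_scal. apply (is_derive_minus (fun _ => 2) (fun z => Th z ^ 2)).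
        apply is_derive_const. apply is_derive_pow, HThd; auto.
        apply is_derive_const.
        cR. simpl. ring. }
      set (d := sg * X2 t y - (sg * Derive rho y - c * (2 * (rho y * rho y) + 2 * Th y * Derive rho y))).
      assert (Hd1 : is_derive f1 y d).
      { unfold f1, d. eapply is_derive_eq.
        apply (is_derive_minus (fun z => sg * X1 t z) (fun z => sg * rho z - c * (2 * Th z * rho z))).
        apply is_derive_scal. apply HX2; lra.
        apply (is_derive_minus (fun z => sg * rho z) (fun z => c * (2 * Th z * rho z))).
        apply is_derive_scal, Hrd; auto.
        apply is_derive_scal. apply (is_derive_mult (fun z => 2 * Th z) rho).
        apply is_derive_scal, HThd; auto. apply Hrd; auto. intros; apply Rmult_comm.
        cR. ring. }
      destruct (max_interior f f1 0 L y d Hy Hder Hd1) as [E1 E2].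
      { intros z Hz. apply Hsp; lra. }
      set (g := fun s => sg * X s y - (sg * Th y + C * exp (- s) * (2 - Th y ^ 2) + eps * (1 + s))).
      set (D := Derive (fun s => X s y) t).
      assert (Hg : is_derive g t (sg * D - (C * (- exp (- t)) * (2 - Th y ^ 2) + eps))).
      { unfold g. eapply is_derive_eq.
        apply (is_derive_minus (fun s => sg * X s y)
           (fun s => sg * Th y + C * exp (- s) * (2 - Th y ^ 2) + eps * (1 + s))).
        apply is_derive_scal. apply Derive_correct, (Hpde t y Ht Hy).
        assert (HU : is_derive (fun s => sg * Th y + C * exp (- s) * (2 - Th y ^ 2) + eps * (1 + s)) t
          (C * (- exp (- t)) * (2 - Th y ^ 2) + eps)) by (auto_derive; [auto | ring]).
        apply HU. cR. unfold D. ring. }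
      assert (E3 := deriv_left_ge0 g t _ t Hg Ht ltac:(intros s Hs; apply Htm; lra)).
      unfold D in E3. rewrite HDX in E3 by auto.
      unfold f1 in E1. unfold d in E2.
      assert (Hr : 0 < rho y) by (apply Hrp; lra).
      set (r := rho y) in *. set (r' := Derive rho y) in *.
      set (A := X1 t y) in *. set (Bv := X2 t y) in *. set (th := Th y) in *.
      set (sD := sg * (/ r * ((Bv * r - A * r') / r ^ 2))) in *.
      assert (Hr3 : 0 < r ^ 3) by (apply pow_lt; lra).
      assert (K1 : sD * r ^ 3 = sg * Bv * r - sg * A * r') by (unfold sD; field; lra).
      assert (K2 : sg * Bv * r <= (sg * r' - c * (2 * (r * r) + 2 * th * r')) * r).
      { apply Rmult_le_compat_r; lra. }
      assert (K3 : sg * A = sg * r - c * (2 * th * r)) by lra.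
      assert (K4 : sD * r ^ 3 <= - 2 * c * r ^ 3).
      { rewrite K1. replace (sg * A * r') with ((sg * A) * r') by ring. rewrite K3.
        replace (- 2 * c * r ^ 3) with (- 2 * c * (r * r) * r) by ring.
        revert K2. nra. }
      assert (K5 : sD <= - 2 * c).
      { apply Rmult_le_reg_r with (r ^ 3); auto. }
      assert (K6 : 0 <= c * th ^ 2) by (apply Rmult_le_pos; [lra| apply pow2_ge_0]).
      fold c in E3. unfold c in K6, K5. unfold c in E3.
      assert (E4 : C * (- exp (- t)) * (2 - th ^ 2) = - (2 * (C * exp (- t))) + C * exp (- t) * th ^ 2) by ring.
      lra.
  }
  assert (Hbd : forall t, 0 <= t -> Rabs (X t x0 - Th x0) <= 2 * C * exp (- t)).
  { intros t Ht. assert (Hx0' : 0 <= x0 <= L) by lra.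
    destruct (HThB x0 Hx0') as [T0 T1]. assert (Hq := HThq x0 Hx0').
    assert (He := exp_pos (- t)).
    assert (Hq2 : C * exp (- t) * (2 - Th x0 ^ 2) <= 2 * C * exp (- t)).
    { replace (2 * C * exp (- t)) with (C * exp (- t) * 2) by ring.
      apply Rmult_le_compat_l; [|lra]. apply Rmult_le_pos; lra. }
    assert (Gen : forall sg, (sg = 1 \/ sg = -1) -> sg * (X t x0 - Th x0) <= 2 * C * exp (- t)).
    { intros sg Hsg. destruct (Rle_or_lt (sg * (X t x0 - Th x0)) (2 * C * exp (- t))) as [|Hlt]; auto.
      exfalso. set (gap := sg * (X t x0 - Th x0) - 2 * C * exp (- t)).
      assert (Hgap : 0 < gap) by (unfold gap; lra).
      set (e := gap / (2 * (1 + t))).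
      assert (He0 : 0 < e) by (unfold e; apply Rdiv_lt_0_compat; lra).
      assert (Hee : e * (1 + t) = gap / 2) by (unfold e; field; lra).
      pose proof (Hmain sg Hsg e He0 t x0 Ht Hx0').
      assert (sg * (X t x0 - Th x0) = sg * X t x0 - sg * Th x0) by ring.
      unfold gap in *. lra. }
    apply abs_le_intro. pose proof (Gen 1 (or_introl eq_refl)). pose proof (Gen (-1) (or_intror eq_refl)).
    lra. }
  apply is_lim_spec. intros eps. simpl.
  assert (Hep := cond_pos eps).
  exists (2 * C / eps). intros t Ht.
  assert (Ht0 : 0 < t) by (assert (0 < 2 * C / eps) by (apply Rdiv_lt_0_compat; lra); lra).
  rewrite <- (Thc_Theta L rho x0) by lra. fold Th.
  eapply Rle_lt_trans. apply Hbd; lra.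
  assert (Hexp : 1 + t < exp t) by (apply exp_ineq1; lra).
  assert (H2C : 2 * C < eps * t).
  { apply (Rmult_lt_compat_r eps) in Ht; auto. unfold Rdiv in Ht.
    rewrite Rmult_assoc, Rinv_l in Ht by lra. lra. }
  rewrite exp_Ropp. 
  apply Rmult_lt_reg_r with (exp t). apply exp_pos.
  rewrite Rmult_assoc, Rinv_l by (pose proof (exp_pos t); lra).
  assert (eps * t < eps * exp t) by (apply Rmult_lt_compat_l; lra). lra.
Qed.
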